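(* Let $\rho\in[0,1)$. The nonlinear process started from $\eta(0)\sim\pi_\rho$ has the same law as the M/D/1 queue with arrival rate $\rho$ started from its stationary distribution $\pi_\rho$; in particular $\rho(t)=\rho$ for all $t$ and the nonlinear process is stationary. Conversely, if the nonlinear process (with arbitrary initial law on $\mathbb{Z}_+$) is stationary, then $\eta(0)\sim\pi_{\rho}$ for some $\rho\in[0,1)$ (namely $\rho=\mathbb{P}(\eta(0)>0)$).
   Context: The nonlinear process $(\eta(t))_{t\in\mathbb{Z}_+}$ takes values in $\mathbb{Z}_+$: $\eta(0)$ has a given distribution; given $\eta(t)$, set $\rho(t):=\mathbb{P}(\eta(t)>0)$, let $N_{t+1}$ be Poisson with mean $\rho(t)$ (mean $0$ meaning identically $0$), independent of everything before, and set $\eta(t+1):=\eta(t)-\mathbf{1}(\eta(t)>0)+N_{t+1}$. The M/D/1 queue with arrival rate $\rho\ge 0$ is the Markov chain $(\zeta(t))_{t\in\mathbb{Z}_+}$ on $\mathbb{Z}_+$ given by $\zeta(t+1):=\zeta(t)-\mathbf{1}(\zeta(t)>0)+M_{t+1}$, where $(M_t)_{t\ge1}$ are i.i.d. Poisson random variables with mean $\rho$, independent of $\zeta(0)$. For $\rho<1$ this chain is irreducible, aperiodic and positive recurrent; $\pi_\rho$ denotes its unique invariant probability measure. *)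

(* Defs.v *)
(* Reals. Laws on Z_+ are represented by probability mass
   functions nat -> R; process laws by their finite-dimensional distributions. *)
From Stdlib Require Import Reals List Arith.
Open Scope R_scope.

(* Poisson(lam) mass function; lam = 0 gives the point mass at 0 (0^0 = 1). *)
Definition poisson (lam : R) (k : nat) : R :=
  exp (- lam) * lam ^ k / INR (fact k).

(* Transition kernel of the M/D/1 queue with arrival rate lam:
   y = x - 1(x>0) + N, N ~ Poisson(lam); note x - 1(x>0) = pred x. *)
Definition md1_kernel (lam : R) (x y : nat) : R :=
  if Nat.leb (Nat.pred x) y then poisson lam (y - Nat.pred x)%nat else 0.

Definition is_prob (mu : nat -> R) : Prop :=
  (forall n, 0 <= mu n) /\ infinite_sum mu 1.

(* P(eta > 0) for eta ~ mu (mu a probability distribution). *)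
Definition rho_of (mu : nat -> R) : R := 1 - mu 0%nat.

(* One step of a law under the kernel with rate lam.  The kernel from x to y
   vanishes unless x <= y+1, so the sum over x is finite. *)
Definition step (lam : R) (mu : nat -> R) (y : nat) : R :=
  sum_f_R0 (fun x => mu x * md1_kernel lam x y) (S y).

(* Marginal law of eta(t) for the nonlinear process started from mu0:
   rho(t) = P(eta(t) > 0) is the rate used at step t -> t+1. *)
Fixpoint marg (mu0 : nat -> R) (t : nat) : nat -> R :=
  match t with
  | O => mu0
  | S t' => step (rho_of (marg mu0 t')) (marg mu0 t')
  end.

Fixpoint path_prob (r : nat -> R) (k : nat) (x : nat) (ys : list nat) : R :=
  match ys with
  | nil => 1
  | y :: ys' => md1_kernel (r k) x y * path_prob r (S k) y ys'
  end.

Definition nl_fdd (mu0 : nat -> R) (s : nat) (x0 : nat) (ys : list nat) : R :=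
  marg mu0 s x0 * path_prob (fun k => rho_of (marg mu0 k)) s x0 ys.

Definition md1_fdd (rho : R) (mu0 : nat -> R) (x0 : nat) (ys : list nat) : R :=
  mu0 x0 * path_prob (fun _ => rho) O x0 ys.

Definition nl_stationary (mu0 : nat -> R) : Prop :=
  forall (s x0 : nat) (ys : list nat), nl_fdd mu0 s x0 ys = nl_fdd mu0 O x0 ys.

(* pi is an invariant probability measure of the M/D/1 queue with rate rho
   (for rho < 1 this is the unique such measure, pi_rho). *)
Definition md1_invariant (rho : R) (pi : nat -> R) : Prop :=
  is_prob pi /\ forall y, step rho pi y = pi y.

(* Main.v *)
Require Import Defs.
From Stdlib Require Import Reals List Arith Lia Lra FunctionalExtensionality.
Open Scope R_scope.

Lemma cv_const (c : R) : Un_cv (fun _ => c) c.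
Proof. intros e He; exists 0%nat; intros; unfold R_dist; rewrite Rminus_diag, Rabs_R0; lra. Qed.

Lemma cv_scal u l c : Un_cv u l -> Un_cv (fun n => c * u n) (c * l).
Proof. intros H. apply (CV_mult (fun _ => c) u); [apply cv_const|exact H]. Qed.

Lemma lim_le u l c : Un_cv u l -> (forall n, u n <= c) -> l <= c.
Proof. intros H Hb. apply (@Rle_cv_lim u (fun _ => c) l c); auto using cv_const. Qed.

Lemma le_lim u l c : Un_cv u l -> (forall n, c <= u n) -> c <= l.
Proof. intros H Hb. apply (@Rle_cv_lim (fun _ => c) u c l); auto using cv_const. Qed.

Lemma sum_mono f a b : (forall n, 0 <= f n) -> (a <= b)%nat -> sum_f_R0 f a <= sum_f_R0 f b.
Proof.
  intros Hf Hab. induction Hab; [lra|]. rewrite tech5. specialize (Hf (S m)). lra.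
Qed.

Lemma psum_le f l n : (forall n, 0 <= f n) -> infinite_sum f l -> sum_f_R0 f n <= l.
Proof.
  intros Hf Hl. apply (growing_ineq (fun n => sum_f_R0 f n)); [|exact Hl].
  intro k. simpl. specialize (Hf (S k)). lra.
Qed.

Section Pois.
Variable r : R.
Hypothesis r0 : 0 <= r.

Definition p k := poisson r k.
Definition F j := sum_f_R0 p j.
Definition Tl j := 1 - F j.
Definition Sm j := sum_f_R0 Tl j.

Lemma p_nonneg k : 0 <= p k.
Proof.
  unfold p, poisson. apply Rmult_le_pos; [apply Rmult_le_pos|].
  - left; apply exp_pos.
  - apply pow_le; exact r0.
  - left; apply Rinv_0_lt_compat, INR_fact_lt_0.
Qed.

Lemma p_rec k : INR (S k) * p (S k) = r * p k.
Proof.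
  unfold p, poisson. rewrite fact_simpl, mult_INR. simpl pow.
  assert (H1 : INR (S k) <> 0) by (apply not_0_INR; lia).
  assert (H2 : INR (fact k) <> 0) by apply INR_fact_neq_0.
  field. auto.
Qed.

Lemma F_cv : Un_cv F 1.
Proof.
  assert (He : exp_in r (exp r)) by (unfold exp; destruct (exist_exp r); simpl; auto).
  assert (H := cv_scal _ _ (exp (- r)) He).
  replace 1 with (exp (- r) * exp r).
  2:{ rewrite exp_Ropp. field. apply Rgt_not_eq, exp_pos. }
  eapply Un_cv_ext; [|exact H]. intro n. simpl. unfold F.
  rewrite scal_sum. apply sum_eq. intros i _. unfold p, poisson. unfold Rdiv. ring.
Qed.

Lemma F_le1 j : F j <= 1.
Proof.
  apply (growing_ineq F); [|apply F_cv]. intro k. unfold F. simpl.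
  generalize (p_nonneg (S k)); lra.
Qed.

Lemma S_id m : Sm m = INR (S m) * (1 - F m) + r * (F m - p m).
Proof.
  induction m.
  - unfold Sm, Tl, F. simpl. ring.
  - unfold Sm. rewrite tech5. fold (Sm m). rewrite IHm.
    unfold Tl. unfold F. rewrite tech5. fold (F m).
    rewrite S_INR. rewrite S_INR.
    generalize (p_rec m). rewrite S_INR. intro H. nra.
Qed.

Lemma tail_ineq m d : INR (S m) * (F (S (m + d)) - F m) <= r * (F (m + d) - F m + p m).
Proof.
  induction d.
  - rewrite Nat.add_0_r. unfold F at 1. rewrite tech5. fold (F m).
    replace (INR (S m) * (F m + p (S m) - F m)) with (INR (S m) * p (S m)) by ring.
    rewrite p_rec. lra.
  - replace (m + S d)%nat with (S (m + d)) by lia.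
    unfold F at 1 2. rewrite tech5. rewrite (tech5 p (m+d)). fold (F (m+d)). fold (F m).
    assert (E : F (S (m+d)) = F (m+d) + p (S (m+d))) by (unfold F; apply tech5).
    rewrite E in IHd.
    assert (H : INR (S m) * p (S (S (m+d))) <= r * p (S (m+d))).
    { rewrite <- p_rec. apply Rmult_le_compat_r; [apply p_nonneg|]. apply le_INR. lia. }
    nra.
Qed.

Lemma S_le_r m : Sm m <= r.
Proof.
  rewrite S_id.
  assert (H : INR (S m) * (1 - F m) <= r * (1 - F m + p m)).
  { apply (@Rle_cv_lim (fun d => INR (S m) * (F (S (m + d)) - F m))
                      (fun d => r * (F (m + d) - F m + p m)) (INR (S m) * (1 - F m)) (r * (1 - F m + p m))).
    - apply tail_ineq.
    - apply cv_scal. intros e He. destruct (F_cv e He) as [N HN]. exists N. intros n Hn.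
      unfold R_dist. replace (F (S (m + n)) - F m - (1 - F m)) with (F (S (m+n)) - 1) by ring.
      apply HN. lia.
    - apply cv_scal. intros e He. destruct (F_cv e He) as [N HN]. exists N. intros n Hn.
      unfold R_dist. replace (F (m + n) - F m + p m - (1 - F m + p m)) with (F (m+n) - 1) by ring.
      apply HN. lia. }
  lra.
Qed.

Lemma S_ge m : r * F m <= Sm (S m).
Proof.
  rewrite S_id.
  assert (E : F (S m) = F m + p (S m)) by (unfold F; apply tech5).
  assert (0 <= INR (S (S m)) * (1 - F (S m))).
  { apply Rmult_le_pos; [apply pos_INR|]. generalize (F_le1 (S m)); lra. }
  rewrite E in *. lra.
Qed.

Lemma Tl_nonneg j : 0 <= Tl j.
Proof. unfold Tl. generalize (F_le1 j); lra. Qed.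

Lemma S_nonneg j : 0 <= Sm j.
Proof. apply cond_pos_sum, Tl_nonneg. Qed.

Lemma S_mono a b : (a <= b)%nat -> Sm a <= Sm b.
Proof. intros; apply sum_mono; auto using Tl_nonneg. Qed.

End Pois.

Lemma kernel_eq r x y : (x <= S y)%nat -> md1_kernel r x y = p r (y - pred x).
Proof.
  intro H. unfold md1_kernel. replace (Nat.leb (pred x) y) with true; [reflexivity|].
  symmetry. apply Nat.leb_le. lia.
Qed.

Lemma D_id r pi K :
  sum_f_R0 (fun x => pi x * F r (K - pred x)) (S K) = sum_f_R0 (step r pi) K.
Proof.
  induction K.
  - simpl. unfold step. simpl. unfold md1_kernel, F, p. simpl. ring.
  - rewrite tech5. rewrite (tech5 (step r pi)). rewrite <- IHK.
    unfold step. rewrite (tech5 (fun x => pi x * md1_kernel r x (S K))).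
    rewrite (sum_eq (fun x => pi x * F r (S K - pred x))
       (fun x => pi x * F r (K - pred x) + pi x * p r (S K - pred x))).
    2:{ intros i Hi. replace (S K - pred i)%nat with (S (K - pred i)) by lia.
        unfold F at 1. rewrite tech5. fold (F r (K - pred i)). ring. }
    rewrite plus_sum.
    rewrite (sum_eq (fun x => pi x * md1_kernel r x (S K)) (fun x => pi x * p r (S K - pred x))).
    2:{ intros i Hi. rewrite kernel_eq by lia. reflexivity. }
    rewrite kernel_eq by lia.
    replace (S K - pred (S (S K)))%nat with 0%nat by (simpl; lia).
    replace (F r 0) with (p r 0) by reflexivity. ring.
Qed.

Section Inv.
Variable r : R.
Variable pi : nat -> R.
Hypothesis Hinv : forall y, step r pi y = pi y.

Lemma D_inv K : sum_f_R0 (fun x => pi x * F r (K - pred x)) (S K) = sum_f_R0 pi K.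
Proof. rewrite D_id. apply sum_eq; auto. Qed.

Lemma Q_id K : sum_f_R0 (fun x => pi x * Sm r (K - pred x)) (S K) = sum_f_R0 pi (S K) - pi 0%nat.
Proof.
  induction K.
  - assert (H := D_inv 0). simpl in *. unfold Sm, Tl, F in *. simpl in *. lra.
  - rewrite tech5. rewrite (tech5 pi (S K)). 
    rewrite (sum_eq (fun x => pi x * Sm r (S K - pred x))
       (fun x => pi x * Sm r (K - pred x) + (pi x - pi x * F r (S K - pred x)))).
    2:{ intros i Hi. replace (S K - pred i)%nat with (S (K - pred i)) by lia.
        unfold Sm at 1. rewrite tech5. fold (Sm r (K - pred i)). unfold Tl. ring. }
    rewrite plus_sum, minus_sum, IHK.
    assert (H := D_inv (S K)). rewrite tech5 in H.
    replace (S K - pred (S (S K)))%nat with 0%nat in * by (simpl; lia).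
    unfold Sm, Tl, F in *. simpl sum_f_R0 in *. lra.
Qed.
End Inv.

Lemma pi0_eq r pi : 0 <= r -> is_prob pi -> (forall y, step r pi y = pi y) -> pi 0%nat = 1 - r.
Proof.
  intros r0 [Hnn Hsum] Hinv.
  assert (Hcv : Un_cv (fun n => sum_f_R0 pi n) 1) by exact Hsum.
  assert (Hle1 : forall n, sum_f_R0 pi n <= 1) by (intro; apply psum_le; auto).
  assert (HcvS : Un_cv (fun n => sum_f_R0 pi (S n)) 1).
  { intros e He. destruct (Hcv e He) as [N HN]. exists N. intros. apply HN. lia. }
  assert (U : 1 - r <= pi 0%nat).
  { assert (HK : forall K, (1 - r) * sum_f_R0 pi (S K) <= pi 0%nat).
    { intro K. assert (H := Q_id r pi Hinv K).
      assert (H2 : sum_f_R0 (fun x => pi x * Sm r (K - pred x)) (S K) <= r * sum_f_R0 pi (S K)).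
      { rewrite scal_sum. apply sum_Rle. intros n _.
        apply Rmult_le_compat_l; auto. apply S_le_r; auto. }
      lra. }
    replace (1 - r) with ((1 - r) * 1) by ring.
    apply (lim_le _ _ _ (cv_scal _ _ (1 - r) HcvS)). exact HK. }
  assert (L : r <= 1 - pi 0%nat).
  { assert (HmL : forall m L, r * F r m * sum_f_R0 pi L <= 1 - pi 0%nat).
    { intros m L. set (K := (S m + L)%nat).
      assert (H := Q_id r pi Hinv K).
      assert (H1 := Hle1 (S K)).
      assert (H2 : sum_f_R0 (fun x => pi x * Sm r (K - pred x)) L <=
                   sum_f_R0 (fun x => pi x * Sm r (K - pred x)) (S K)).
      { apply sum_mono; [|unfold K; lia]. intro n. apply Rmult_le_pos; auto. apply S_nonneg; auto. }
      assert (H3 : Sm r (S m) * sum_f_R0 pi L <= sum_f_R0 (fun x => pi x * Sm r (K - pred x)) L).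
      { rewrite scal_sum. apply sum_Rle. intros n Hn.
        apply Rmult_le_compat_l; auto. apply S_mono; auto. unfold K; lia. }
      assert (H4 : r * F r m <= Sm r (S m)) by (apply S_ge; auto).
      assert (H5 : 0 <= sum_f_R0 pi L) by (apply cond_pos_sum; auto).
      assert (H6 : r * F r m * sum_f_R0 pi L <= Sm r (S m) * sum_f_R0 pi L)
        by (apply Rmult_le_compat_r; auto).
      lra. }
    assert (HL : forall L, r * sum_f_R0 pi L <= 1 - pi 0%nat).
    { intro L. replace (r * sum_f_R0 pi L) with ((r * sum_f_R0 pi L) * 1) by ring.
      apply (lim_le _ _ _ (cv_scal _ _ (r * sum_f_R0 pi L) (F_cv r))).
      intro m. rewrite <- (HmL m L). right. ring. }
    replace r with (r * 1) by ring.
    apply (lim_le _ _ _ (cv_scal _ _ r Hcv)). exact HL. }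
  lra.
Qed.

Lemma path_const c k k' x ys : path_prob (fun _ => c) k x ys = path_prob (fun _ => c) k' x ys.
Proof.
  revert k k' x. induction ys as [|y ys IH]; intros k k' x; simpl; [reflexivity|].
  rewrite (IH (S k) (S k')). reflexivity.
Qed.

Lemma all_zero mu : (forall y, step 1 mu y = mu y) -> mu 0%nat = 0 ->
  forall y x, (x <= y)%nat -> mu x = 0.
Proof.
  intros Hinv H0. induction y; intros x Hx.
  - replace x with 0%nat by lia. exact H0.
  - destruct (Nat.eq_dec x (S y)) as [->|]; [|apply IHy; lia].
    assert (Hs := Hinv y). unfold step in Hs. rewrite tech5 in Hs.
    rewrite (sum_eq _ (fun _ => 0)) in Hs.
    2:{ intros i Hi. rewrite (IHy i Hi). ring. }
    rewrite (IHy y (le_n y)) in Hs.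
    assert (Hz : sum_f_R0 (fun _ : nat => 0) y = 0).
    { clear. induction y; simpl; [reflexivity|]. rewrite IHy. ring. }
    rewrite Hz in Hs. rewrite kernel_eq in Hs by lia.
    replace (y - pred (S y))%nat with 0%nat in Hs by (simpl; lia).
    assert (Hp : 0 < p 1 0).
    { unfold p, poisson. simpl. rewrite Rmult_1_r. unfold Rdiv. rewrite Rinv_1, Rmult_1_r. apply exp_pos. }
    nra.
Qed.

Theorem lemma2p3 :
  (forall (rho : R) (pi : nat -> R),
      0 <= rho < 1 -> md1_invariant rho pi ->
      (forall (x0 : nat) (ys : list nat), nl_fdd pi O x0 ys = md1_fdd rho pi x0 ys)
      /\ (forall t : nat, rho_of (marg pi t) = rho)
      /\ nl_stationary pi)
  /\
  (forall mu0 : nat -> R,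
      is_prob mu0 -> nl_stationary mu0 ->
      0 <= rho_of mu0 < 1 /\ md1_invariant (rho_of mu0) mu0).
Proof.
  split.
  - intros rho pi [r0 r1] [Hp Hinv].
    assert (Hrho : rho_of pi = rho).
    { unfold rho_of. rewrite (pi0_eq rho pi); auto. ring. }
    assert (Hm : forall t, marg pi t = pi).
    { induction t; simpl; [reflexivity|]. rewrite IHt, Hrho.
      apply functional_extensionality. exact Hinv. }
    assert (Hr : (fun k => rho_of (marg pi k)) = (fun _ => rho)).
    { apply functional_extensionality. intro k. rewrite Hm. exact Hrho. }
    split; [|split].
    + intros x0 ys. unfold nl_fdd, md1_fdd. rewrite Hr. simpl. reflexivity.
    + intro t. rewrite Hm. exact Hrho.
    + intros s x0 ys. unfold nl_fdd. rewrite Hr, !Hm. simpl.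
      rewrite (path_const rho s 0). reflexivity.
  - intros mu0 Hp Hst.
    assert (Hinv : forall y, step (rho_of mu0) mu0 y = mu0 y).
    { intro y. assert (H := Hst 1%nat y nil). unfold nl_fdd in H. simpl in H. lra. }
    destruct Hp as [Hnn Hsum].
    assert (Hle : mu0 0%nat <= 1).
    { apply (psum_le mu0 1 0) in Hsum; auto. }
    assert (Hpos : 0 < mu0 0%nat).
    { destruct (Rle_lt_or_eq_dec 0 (mu0 0%nat) (Hnn 0%nat)) as [|E]; [assumption|].
      exfalso.
      assert (Hr1 : rho_of mu0 = 1) by (unfold rho_of; rewrite <- E; ring).
      rewrite Hr1 in Hinv.
      assert (Z := all_zero mu0 Hinv (eq_sym E)).
      assert (Hz : forall n, sum_f_R0 mu0 n = 0).
      { induction n; simpl; [apply (Z 0%nat); lia|]. rewrite IHn, (Z (S n)); [ring|lia]. }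
      assert (Hc : Un_cv (fun n => sum_f_R0 mu0 n) 0).
      { eapply Un_cv_ext; [|apply cv_const]. intro n. simpl. rewrite Hz. reflexivity. }
      assert (1 = 0) by (apply (UL_sequence (fun n => sum_f_R0 mu0 n)); [exact Hsum|exact Hc]).
      lra. }
    split; [unfold rho_of; lra|]. split; [split; auto|exact Hinv].
Qed.
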